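(* Suppose the designer's preferences satisfy $A_1=A_0=\bar A\ge 0$ and $B_1=B_0=\bar B\ge 0$. Then the designer's optimal classifier (maximizer of $EU_D(\delta\mid r)$ over $\delta\in[0,1]^2$) is $\delta^*=(1,1)$ if $r(\bar A-\bar B)>0$ and $\delta^*=(0,0)$ if $r(\bar A-\bar B)<0$; and if $r=0$ or $\bar A=\bar B$, all classifiers give the designer the same expected payoff.
   Context: A unit mass of individuals $i\in[0,1]$ each privately knows a cost $\gamma_i\in\mathbb{R}$ of choosing behavior $\beta_i=1$ (compliance) rather than $\beta_i=0$. Costs are distributed according to a continuously differentiable CDF $F$ whose density $f$ is log-concave with full support on $\mathbb{R}$. A classifier is $\delta=(\delta_1,\delta_0)\in[0,1]^2$. Each individual's behavior generates a signal $s_i\in\{0,1\}$ with $\Pr[s_i=\beta_i]=\phi$, $\phi\in(\tfrac12,1]$ fixed, and the classifier assigns $d_i\in\{0,1\}$ with $\Pr[d_i=s_i\mid s_i]=\delta_{s_i}$. An individual with $d_i=1$ receives reward $r\in\mathbb{R}$. Let $\rho(\delta,\phi)=(\delta_1+\delta_0-1)(2\phi-1)$; individual $i$ chooses $\beta_i=1$ iff $\gamma_i\le r\rho(\delta,\phi)$, giving prevalence $\pi=F(r\rho(\delta,\phi))$. The designer's payoffs are $A_1$ (complier, $d_i=1$), $A_0$ (complier, $d_i=0$), $B_1$ (non-complier, $d_i=0$), $B_0$ (non-complier, $d_i=1$), with expected payoff $EU_D(\delta\mid r)=\pi\big[\phi(A_1\delta_1+A_0(1-\delta_1))+(1-\phi)(A_0\delta_0+A_1(1-\delta_0))\big]+(1-\pi)\big[\phi(B_1\delta_0+B_0(1-\delta_0))+(1-\phi)(B_0\delta_1+B_1(1-\delta_1))\big]$.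 *)

(* Defs.v *)
From Stdlib Require Import Reals.
From Coquelicot Require Import Coquelicot.
Open Scope R_scope.

(* F is a cumulative distribution function on R (F is assumed differentiable
   below, hence continuous, so right-continuity is automatic but stated anyway). *)
Definition is_CDF (F : R -> R) : Prop :=
  (forall x y, x <= y -> F x <= F y) /\
  (forall x, is_lim F x (F x)) /\
  is_lim F m_infty 0 /\
  is_lim F p_infty 1.

Definition has_C1_density (F f : R -> R) : Prop :=
  (forall x, is_derive F x (f x)) /\ (forall x, continuous f x).

Definition log_concave (f : R -> R) : Prop :=
  (forall x, 0 <= f x) /\
  (forall x y t, 0 <= t <= 1 -> 0 < f x -> 0 < f y ->
     0 < f (t * x + (1 - t) * y) /\
     t * ln (f x) + (1 - t) * ln (f y) <= ln (f (t * x + (1 - t) * y))).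

(* f has full support on R: the closure of {x | f x <> 0} is all of R,
   i.e. every nonempty open interval contains a point where f is nonzero. *)
Definition full_support (f : R -> R) : Prop :=
  forall a b, a < b -> exists x, a < x < b /\ f x <> 0.

Definition rho (d1 d0 phi : R) : R := (d1 + d0 - 1) * (2 * phi - 1).

Definition prevalence (F : R -> R) (r phi d1 d0 : R) : R := F (r * rho d1 d0 phi).

Definition EU_D (F : R -> R) (phi r A1 A0 B1 B0 d1 d0 : R) : R :=
  let p := prevalence F r phi d1 d0 in
  p * (phi * (A1 * d1 + A0 * (1 - d1)) + (1 - phi) * (A0 * d0 + A1 * (1 - d0)))
  + (1 - p) * (phi * (B1 * d0 + B0 * (1 - d0)) + (1 - phi) * (B0 * d1 + B1 * (1 - d1))).

Definition classifier (d1 d0 : R) : Prop := 0 <= d1 <= 1 /\ 0 <= d0 <= 1.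

Definition unique_optimal (U : R -> R -> R) (e1 e0 : R) : Prop :=
  classifier e1 e0 /\
  (forall d1 d0, classifier d1 d0 -> U d1 d0 <= U e1 e0) /\
  (forall d1 d0, classifier d1 d0 -> U d1 d0 = U e1 e0 -> d1 = e1 /\ d0 = e0).

(* Main.v *)
Require Import Defs.
From Stdlib Require Import Reals Lra.
From Coquelicot Require Import Coquelicot.
Open Scope R_scope.

Lemma strict_F (F f : R -> R) :
  (forall x y, x <= y -> F x <= F y) -> (forall x, is_derive F x (f x)) ->
  full_support f -> forall x y, x < y -> F x < F y.
Proof.
  intros Hm Hd Hs x y Hxy.
  destruct (Rle_lt_or_eq_dec _ _ (Hm x y (Rlt_le _ _ Hxy))) as [H|H]; auto.
  exfalso.
  destruct (Hs x y Hxy) as [z [Hz Hfz]].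
  apply Hfz.
  assert (Hc : forall t, x <= t <= y -> F t = F x).
  { intros t Ht. apply Rle_antisym.
    - rewrite H. apply Hm; lra.
    - apply Hm; lra. }
  assert (Hpos : 0 < Rmin (z - x) (y - z)) by (apply Rmin_glb_lt; lra).
  assert (Hloc : locally z (fun t => (fun _ => F x) t = F t)).
  { exists (mkposreal _ Hpos). intros t Ht.
    unfold ball in Ht; simpl in Ht; unfold AbsRing_ball, abs, minus, plus, opp in Ht; simpl in Ht.
    pose proof (Rmin_l (z - x) (y - z)). pose proof (Rmin_r (z - x) (y - z)).
    apply Rabs_def2 in Ht.
    symmetry. apply Hc. lra. }
  assert (D1 : is_derive (fun _ => F x) z 0) by (apply (is_derive_const (K:=R_AbsRing) (F x) z)).
  assert (D2 : is_derive F z 0) by (eapply is_derive_ext_loc; eauto).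
  pose proof (is_derive_unique _ _ _ D2) as E1.
  pose proof (is_derive_unique _ _ _ (Hd z)) as E2.
  rewrite <- E2. exact E1.
Qed.

Theorem proposition2 (F f : R -> R) (phi r Abar Bbar : R)
  (HF : is_CDF F) (Hf : has_C1_density F f) (Hlc : log_concave f)
  (Hsupp : full_support f) (Hphi : 1 / 2 < phi <= 1)
  (HA : 0 <= Abar) (HB : 0 <= Bbar) :
  let U := EU_D F phi r Abar Abar Bbar Bbar in
  (r * (Abar - Bbar) > 0 -> unique_optimal U 1 1) /\
  (r * (Abar - Bbar) < 0 -> unique_optimal U 0 0) /\
  ((r = 0 \/ Abar = Bbar) ->
     forall d1 d0 e1 e0, classifier d1 d0 -> classifier e1 e0 ->
       U d1 d0 = U e1 e0).
Proof.
  intros U.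
  destruct HF as [Hm _]. destruct Hf as [Hd _].
  pose proof (strict_F F f Hm Hd Hsupp) as Hs.
  set (k := 2 * phi - 1).
  assert (Hk : 0 < k) by (unfold k; lra).
  set (G := fun s => (Abar - Bbar) * F (r * ((s - 1) * k))).
  assert (HU : forall d1 d0, U d1 d0 = Bbar + G (d1 + d0)).
  { intros. unfold U, G, EU_D, prevalence, rho, k.
    replace (d1 + d0 - 1) with (d1 + d0 - 1) by ring. ring. }
  assert (Hinc : r * (Abar - Bbar) > 0 -> forall s s', s < s' -> G s < G s').
  { intros Hc s s' Hss. unfold G.
    assert (Hkk : 0 < (s' - s) * k) by (apply Rmult_lt_0_compat; lra).
    destruct (Rlt_or_le 0 r) as [Hr|Hr].
    - assert (Hab : 0 < Abar - Bbar).
      { destruct (Rlt_or_le 0 (Abar - Bbar)); auto. nra. }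
      apply Rmult_lt_compat_l; auto. apply Hs. nra.
    - assert (Hr' : r < 0) by (destruct Hr; auto; subst; lra).
      assert (Hab : Abar - Bbar < 0) by nra.
      assert (F (r * ((s' - 1) * k)) < F (r * ((s - 1) * k))) by (apply Hs; nra).
      nra. }
  assert (Hdec : r * (Abar - Bbar) < 0 -> forall s s', s < s' -> G s' < G s).
  { intros Hc s s' Hss. unfold G.
    assert (Hkk : 0 < (s' - s) * k) by (apply Rmult_lt_0_compat; lra).
    destruct (Rlt_or_le 0 r) as [Hr|Hr].
    - assert (Hab : Abar - Bbar < 0) by nra.
      assert (F (r * ((s - 1) * k)) < F (r * ((s' - 1) * k))) by (apply Hs; nra).
      nra.
    - assert (Hr' : r < 0) by (destruct Hr; auto; subst; lra).
      assert (Hab : 0 < Abar - Bbar).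
      { destruct (Rlt_or_le 0 (Abar - Bbar)); auto. nra. }
      apply Rmult_lt_compat_l; auto. apply Hs. nra. }
  split; [|split].
  - intros Hc. unfold unique_optimal, classifier. split; [lra|split].
    + intros d1 d0 Hcl. rewrite !HU.
      destruct (Rle_lt_or_eq_dec (d1 + d0) (1 + 1)) as [Hl|Hl]; [lra| |].
      * pose proof (Hinc Hc _ _ Hl); lra.
      * rewrite Hl; lra.
    + intros d1 d0 Hcl Heq. rewrite !HU in Heq.
      destruct (Rle_lt_or_eq_dec (d1 + d0) (1 + 1)) as [Hl|Hl]; [lra| |lra].
      pose proof (Hinc Hc _ _ Hl); lra.
  - intros Hc. unfold unique_optimal, classifier. split; [lra|split].
    + intros d1 d0 Hcl. rewrite !HU.
      destruct (Rle_lt_or_eq_dec (0 + 0) (d1 + d0)) as [Hl|Hl]; [lra| |].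
      * pose proof (Hdec Hc _ _ Hl); lra.
      * rewrite <- Hl; lra.
    + intros d1 d0 Hcl Heq. rewrite !HU in Heq.
      destruct (Rle_lt_or_eq_dec (0 + 0) (d1 + d0)) as [Hl|Hl]; [lra| |lra].
      pose proof (Hdec Hc _ _ Hl); lra.
  - intros [Hr|Hab] d1 d0 e1 e0 _ _; rewrite !HU; unfold G.
    + subst r. rewrite !Rmult_0_l. reflexivity.
    + rewrite Hab. ring.
Qed.
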